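(* Let $n$ be a positive integer and let $T$ be a strongly connected tournament on $n$ vertices which is not isomorphic to $D_n$, and let $k>1$ be an integer. Then $P(T;k)<P(D_n;k)$. Here $D_n$ is the tournament on $\{v_1,\ldots,v_n\}$ in which, for $1\le i<j\le n$ with $(i,j)\ne(1,n)$, the edge between $v_i$ and $v_j$ is directed from $v_i$ to $v_j$, and the edge between $v_1$ and $v_n$ is directed from $v_n$ to $v_1$.
   Context: A tournament is an orientation of a complete graph; it is strongly connected if for any two vertices there is a directed path from each to the other. For a positive integer $k$, a proper $k$-coloring of a digraph $D$ is a map $c:V(D)\to\{1,\ldots,k\}$ such that each color class induces a subdigraph with no directed cycle; $P(D;k)$ denotes the number of proper $k$-colorings of $D$. *)

(* Defs.v *)
From mathcomp Require Import all_boot.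
Set Implicit Arguments. Unset Strict Implicit. Unset Printing Implicit Defensive.

(* A digraph on a finite vertex type V is a relation E : rel V (E x y = arc x -> y). *)

Definition is_tournament (V : finType) (E : rel V) : Prop :=
  (forall x, ~~ E x x) /\ (forall x y, x != y -> (E x y (+) E y x)).

Definition strongly_connected (V : finType) (E : rel V) : Prop :=
  forall x y, connect E x y.

Definition has_dicycle_inb (V : finType) (E : rel V) (A : {set V}) : bool :=
  [exists x, exists y, [&& x \in A, y \in A, E x y &
                  connect (fun a b => E a b && (a \in A) && (b \in A)) y x]].

Definition proper_coloringb (V : finType) (E : rel V) (k : nat) (c : {ffun V -> 'I_k}) : bool :=
  [forall i : 'I_k, ~~ has_dicycle_inb E [set v | c v == i]].

Definition chrom_poly (V : finType) (E : rel V) (k : nat) : nat :=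
  #|[set c : {ffun V -> 'I_k} | proper_coloringb E c]|.

(* D_n on vertices 'I_n (v_{i+1} <-> i): for i < j, i -> j except the pair
   (0, n-1), which is oriented n-1 -> 0. *)

Definition Dn (n : nat) : rel 'I_n :=
  fun i j => ((i < j) && ~~ ((i == 0 :> nat) && (j == n.-1 :> nat)))
          || [&& (i == n.-1 :> nat), (j == 0 :> nat) & (0 < n.-1)].

Definition digraph_iso (V W : finType) (E : rel V) (F : rel W) : Prop :=
  exists f : V -> W, bijective f /\ forall x y, E x y = F (f x) (f y).
Arguments Dn n i j : clear implicits.

(* Main.v *)
Require Import Defs.
From mathcomp Require Import all_boot.
From mathcomp Require Import zify.
From Stdlib Require Import Lia.
Set Implicit Arguments. Unset Strict Implicit. Unset Printing Implicit Defensive.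

Definition rin (V : finType) (T : rel V) (A : {set V}) : rel V :=
  fun a b => T a b && (a \in A) && (b \in A).
Definition strongin (V : finType) (T : rel V) (A : {set V}) : Prop :=
  forall x y, x \in A -> y \in A -> connect (rin T A) x y.

Lemma tour_anti (V : finType) (T : rel V) x y :
  is_tournament T -> T x y -> ~~ T y x.
Proof.
case=> irr tot Hxy.
have xy : x != y by apply/eqP=> e; subst; rewrite (negbTE (irr y)) in Hxy.
by have := tot x y xy; rewrite Hxy.
Qed.

Lemma tour_neq (V : finType) (T : rel V) x y :
  is_tournament T -> T x y -> x != y.
Proof. by case=> irr _ Hxy; apply/eqP=> e; subst; rewrite (negbTE (irr y)) in Hxy. Qed.

Lemma tour_tot (V : finType) (T : rel V) x y :
  is_tournament T -> x != y -> ~~ T x y -> T y x.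
Proof. by case=> _ tot xy; have := tot x y xy; case: (T x y); case: (T y x). Qed.

Lemma exit_path (V : finType) (e : rel V) (X : pred V) x p :
  path e x p -> X x -> ~~ X (last x p) -> exists u z, [/\ X u, ~~ X z & e u z].
Proof.
elim: p x => [|y p IH] x /=; first by move=> _ ->.
case/andP=> exy pp Xx Nl; case Xy: (X y); first by apply: (IH y).
by exists x, y; rewrite Xy.
Qed.

Lemma exit_connect (V : finType) (e : rel V) (X : pred V) x w :
  connect e x w -> X x -> ~~ X w -> exists u z, [/\ X u, ~~ X z & e u z].
Proof. by case/connectP=> p pp ->; apply: exit_path. Qed.

Lemma rin_sub (V : finType) (T : rel V) (A B : {set V}) :
  A \subset B -> forall x y, connect (rin T A) x y -> connect (rin T B) x y.
Proof.
move=> AB x y; apply: connect_sub => u v /andP[/andP[Tuv uA] vA].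
by apply: connect1; rewrite /rin Tuv (subsetP AB _ uA) (subsetP AB _ vA).
Qed.

Lemma tri_path (V : finType) (T : rel V) (A : {set V}) v a p :
  is_tournament T -> path (rin T A) a p -> a \in A -> T v a -> T (last a p) v ->
  exists p1 q1, [/\ p1 \in A, q1 \in A, T v p1, T p1 q1 & T q1 v].
Proof.
move=> Tt; elim: p a => [|x p IH] a /=.
  by move=> _ _ Tva Tav; have := tour_anti Tt Tva; rewrite Tav.
case/andP=> /andP[/andP[Tax aA] xA] pp _ Tva Tl.
case Txv: (T x v); first by exists a, x.
have xv : x != v.
  by apply/eqP=> e; subst; have := tour_anti Tt Tva; rewrite Tax.
by apply: (IH x) => //; apply: tour_tot; rewrite // Txv.
Qed.

Lemma tri_through (V : finType) (T : rel V) (A : {set V}) v w :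
  is_tournament T -> strongin T A -> v \in A -> w \in A -> w != v ->
  exists p1 q1, [/\ p1 \in A, q1 \in A, T v p1, T p1 q1 & T q1 v].
Proof.
move=> Tt sA vA wA wv.
have [u [z [/= /eqP uv zv /andP[/andP[Tuz _] zA]]]] :=
  exit_connect (X := pred1 v) (sA v w vA wA) (eqxx v) wv.
subst u.
have Nv : ~~ (predC1 v) v by rewrite /= eqxx.
have [u [z' [/= uv /negPn/eqP zv' /andP[/andP[Tuz' uA] _]]]] :=
  exit_connect (X := predC1 v) (sA w v wA vA) wv Nv.
subst z'.
case/connectP: (sA z u zA uA) => p pp lp.
apply: (tri_path Tt pp zA Tuz); by rewrite -lp.
Qed.

Lemma hub_strong (V : finType) (T : rel V) (B : {set V}) h :
  (forall u, u \in B -> connect (rin T B) u h) ->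
  (forall u, u \in B -> connect (rin T B) h u) -> strongin T B.
Proof. by move=> H1 H2 x y xB yB; apply: connect_trans (H1 x xB) (H2 y yB). Qed.

Lemma cardD1S (V : finType) (A : {set V}) v : v \in A -> #|A| = #|A :\ v|.+1.
Proof. by move=> vA; rewrite (cardsD1 v A) vA. Qed.

Lemma two_elems (V : finType) (A : {set V}) v :
  v \in A -> 2 <= #|A| -> exists2 w, w \in A & w != v.
Proof.
move=> vA c2.
have : 0 < #|A :\ v| by move: c2; rewrite (cardD1S vA) ltnS.
by case/card_gt0P=> w; rewrite !inE => /andP[wv wA]; exists w.
Qed.

Lemma grow (V : finType) (T : rel V) (A A' : {set V}) :
  is_tournament T -> strongin T A -> A' \subset A -> strongin T A' ->
  2 <= #|A'| -> #|A'|.+2 <= #|A| ->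
  exists A'' : {set V}, [/\ A'' \subset A, strongin T A'' & #|A''| = #|A'|.+1].
Proof.
move=> Tt sA sub sA' c2 cA.
have [p0 p0A'] : exists p0, p0 \in A' by apply/card_gt0P; lia.
have p0A := subsetP sub _ p0A'.
have [y0 y0A y0nA'] : exists2 y0, y0 \in A & y0 \notin A'.
  have : A' \proper A by rewrite properEcard sub /=; lia.
  by case/properP.
case: (boolP [exists y, exists p, exists q,
   [&& y \in A, y \notin A', p \in A', q \in A', T y p & T q y]]).
  case/existsP=> y /existsP[p /existsP[q /and5P[yA ynA' pA' qA' /andP[Typ Tqy]]]].
  exists (y |: A'); split.
  - by rewrite subUset sub sub1set yA.
  - have subA' : A' \subset y |: A' by apply: subsetUr.
    have yin : y \in y |: A' by rewrite setU11.
    apply: (hub_strong (h := p)) => u.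
      case/setU1P=> [->|uA'].
        by apply: connect1; rewrite /rin Typ yin (subsetP subA' _ pA').
      exact: rin_sub subA' _ _ (sA' _ _ uA' pA').
    case/setU1P=> [->|uA'].
      apply: connect_trans (rin_sub subA' (sA' _ _ pA' qA')) _.
      by apply: connect1; rewrite /rin Tqy yin (subsetP subA' _ qA').
    exact: rin_sub subA' _ _ (sA' _ _ pA' uA').
  - by rewrite cardsU1 ynA'.
move=> H.
have H' : forall y p q, y \in A -> y \notin A' -> p \in A' -> q \in A' -> T y p -> ~~ T q y.
  move=> y p q yA ynA' pA' qA' Typ; apply/negP=> Tqy; move/negP: H; apply.
  by apply/existsP; exists y; apply/existsP; exists p; apply/existsP; exists q;
     rewrite yA ynA' pA' qA' Typ Tqy.
pose O := [set y in A | (y \notin A') && [forall p in A', T p y]].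
pose P : pred V := fun u => (u \in A) && (u \notin A').
have X1 : P y0 by rewrite /P y0A y0nA'.
have X2 : ~~ P p0 by rewrite /P p0A' andbF.
have [u [z [/andP[uA unA'] zX /andP[/andP[Tuz _] zA]]]] :=
  exit_connect (sA _ _ y0A p0A) X1 X2.
have zA' : z \in A' by move: zX; rewrite /P zA /= negbK.
have unO : u \notin O.
  rewrite inE uA unA' /=; apply/negP=> /forallP/(_ z); rewrite zA' /= => Tzu.
  by have := tour_anti Tt Tzu; rewrite Tuz.
pose P2 : pred V := fun u => u \in A' :|: O.
have X3 : P2 p0 by rewrite /P2 inE p0A'.
have X4 : ~~ P2 u by rewrite /P2 inE negb_or unO unA'.
have [x [w [xX wX /andP[/andP[Txw xA] wA]]]] :=
  exit_connect (sA _ _ p0A uA) X3 X4.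
move: wX; rewrite /P2 inE negb_or => /andP[wnA' wnO].
have [p pA' Twp] : exists2 p, p \in A' & T w p.
  move: wnO; rewrite inE wA wnA' /= => /forallP H2.
  have [p] : exists p, ~~ ((p \in A') ==> T p w).
    by apply/existsP; rewrite -negb_forall; apply/forallP=> F; apply: H2 F.
  rewrite negb_imply => /andP[pA' nTpw]; exists p => //.
  apply: tour_tot nTpw => //; apply/eqP=> e; subst; by rewrite pA' in wnA'.
have Twq : forall q, q \in A' -> T w q.
  move=> q qA'; apply: tour_tot Tt _ (H' _ _ _ wA wnA' pA' qA' Twp).
  by apply/eqP=> e; subst; rewrite qA' in wnA'.
have xO : x \in O.
  move: xX; rewrite /P2 inE; case/orP=> // xA'.
  by have := tour_anti Tt Txw; rewrite Twq.
move: (xO); rewrite inE xA /= => /andP[xnA' /forallP Tpx].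
have Tpx' : forall q, q \in A' -> T q x by move=> q qA'; have := Tpx q; rewrite qA'.
have [a0 a0inA' a0p0] := two_elems p0A' c2.
have a0A' : a0 \in A' :\ p0 by rewrite !inE a0p0 a0inA'.
set B := x |: (w |: (A' :\ p0)).
have xB : x \in B by rewrite !inE eqxx.
have wB : w \in B by rewrite !inE eqxx orbT.
have aB : forall a, a \in A' :\ p0 -> a \in B by move=> a aD; rewrite /B !in_setU1 aD !orbT.
exists B; split.
- rewrite !subUset !sub1set xA wA /=; apply: subset_trans sub.
  exact: subsetDl.
- apply: (hub_strong (h := x)) => v.
    rewrite /B !in_setU1 => /orP[/eqP->//|/orP[/eqP->|vD]]; last have vA' := subsetP (subsetDl A' [set p0]) _ vD.
      apply: connect_trans (connect1 (_ : rin T B w a0)) (connect1 (_ : rin T B a0 x)).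
        by rewrite /rin Twq // wB aB.
      by rewrite /rin Tpx' // xB aB.
    by apply: connect1; rewrite /rin Tpx' // xB aB.
  rewrite /B !in_setU1 => /orP[/eqP->//|/orP[/eqP->|vD]]; last have vA' := subsetP (subsetDl A' [set p0]) _ vD.
    by apply: connect1; rewrite /rin Txw xB wB.
  apply: connect_trans (connect1 (_ : rin T B x w)) (connect1 (_ : rin T B w v)).
    by rewrite /rin Txw xB wB.
  by rewrite /rin Twq // wB aB.
- have xnw : x != w by apply: tour_neq Txw.
  have xn : x \notin w |: (A' :\ p0).
    by rewrite !in_setU1 negb_or xnw /=; apply: contra xnA'; apply: (subsetP (subsetDl A' [set p0])).
  have wn : w \notin (A' :\ p0).
    by apply: contra wnA'; apply: (subsetP (subsetDl A' [set p0])).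
  by rewrite cardsU1 xn cardsU1 wn (cardD1S p0A').
Qed.

Lemma tri_set (V : finType) (T : rel V) v p q :
  is_tournament T -> T v p -> T p q -> T q v ->
  #|(v |: (p |: [set q]))| = 3 /\ strongin T (v |: (p |: [set q])).
Proof.
move=> Tt Tvp Tpq Tqv.
have vp := tour_neq Tt Tvp; have pq := tour_neq Tt Tpq; have qv := tour_neq Tt Tqv.
set B := (v |: (p |: [set q])).
have vB : v \in B by rewrite !inE eqxx.
have pB : p \in B by rewrite !inE eqxx orbT.
have qB : q \in B by rewrite !inE eqxx !orbT.
split.
  rewrite /B !cardsU1 cards1 !inE negb_or vp eq_sym qv /= pq //.
apply: (hub_strong (h := v)) => u; rewrite /B !inE => /orP[/eqP->//|/orP[/eqP->|/eqP->]].
- apply: connect_trans (connect1 (_ : rin T B p q)) (connect1 (_ : rin T B q v)).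
  by rewrite /rin Tpq pB qB. by rewrite /rin Tqv qB vB.
- by apply: connect1; rewrite /rin Tqv qB vB.
- by apply: connect1; rewrite /rin Tvp pB vB.
- apply: connect_trans (connect1 (_ : rin T B v p)) (connect1 (_ : rin T B p q)).
  by rewrite /rin Tvp pB vB. by rewrite /rin Tpq pB qB.
Qed.

Lemma strong_tri (V : finType) (T : rel V) (A : {set V}) :
  is_tournament T -> strongin T A -> 2 <= #|A| ->
  exists v p q, [/\ [&& v \in A, p \in A & q \in A], T v p, T p q & T q v].
Proof.
move=> Tt sA c2.
have [v vA] : exists v, v \in A by apply/card_gt0P; lia.
have [w wA wv] := two_elems vA c2.
have [p [q [pA qA Tvp Tpq Tqv]]] := tri_through Tt sA vA wA wv.
by exists v, p, q; rewrite vA pA qA.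
Qed.

Lemma chain (V : finType) (T : rel V) (A : {set V}) :
  is_tournament T -> strongin T A -> forall m, 3 <= m -> m < #|A| ->
  exists A' : {set V}, [/\ A' \subset A, strongin T A' & #|A'| = m].
Proof.
move=> Tt sA; elim=> [|m IH] // m3 mA.
case: (ltnP 3 m.+1) => h.
  have [A' [sub sA' cA']] := IH h (ltnW mA).
  have h1 : 2 <= #|A'| by lia.
  have h2 : #|A'|.+2 <= #|A| by lia.
  have [A'' [sub' sA'' cA'']] := grow Tt sA sub sA' h1 h2.
  by exists A''; rewrite cA'' cA'.
have m2 : m = 2 by lia.
have h1 : 2 <= #|A| by lia.
have [v [p [q [/and3P[vA pA qA] Tvp Tpq Tqv]]]] := strong_tri Tt sA h1.
have [c3 s3] := tri_set Tt Tvp Tpq Tqv.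
exists (v |: (p |: [set q])); split => //; last by rewrite c3 m2.
by rewrite !subUset !sub1set vA pA qA.
Qed.

Lemma removal (V : finType) (T : rel V) (A : {set V}) :
  is_tournament T -> strongin T A -> 4 <= #|A| ->
  exists2 v, v \in A & strongin T (A :\ v).
Proof.
move=> Tt sA c4.
have h1 : 3 <= #|A|.-1 by lia.
have h2 : #|A|.-1 < #|A| by lia.
have [A' [sub sA' cA']] := chain Tt sA h1 h2.
have [v vA vnA'] : exists2 v, v \in A & v \notin A'.
  have : A' \proper A by rewrite properEcard sub /=; lia.
  by case/properP.
exists v => //.
have -> : A :\ v = A'.
  apply/eqP; rewrite eq_sym eqEcard; apply/andP; split.
    apply/subsetP=> x xA'; rewrite !inE (subsetP sub _ xA') andbT.
    by apply/eqP=> e; subst; rewrite xA' in vnA'.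
  by move: (cardD1S vA); rewrite cA'; lia.
by [].
Qed.

Definition upd (V : finType) k (c : {ffun V -> 'I_k}) y i : {ffun V -> 'I_k} :=
  [ffun x => if x == y then i else c x].

Lemma updE (V : finType) k (c : {ffun V -> 'I_k}) y i x :
  upd c y i x = if x == y then i else c x.
Proof. by rewrite ffunE. Qed.

Lemma card_fix (V : finType) k (S : {set {ffun V -> 'I_k}}) y a :
  y != a -> (forall c i, c \in S -> upd c y i \in S) ->
  #|S :&: [set c : {ffun V -> 'I_k} | c y == c a]| * k = #|S|.
Proof.
move=> ya HS.
set Q := S :&: [set c : {ffun V -> 'I_k} | c y == c a].
have ay : (a == y) = false by rewrite eq_sym; apply: negbTE.
apply/eqP; rewrite eqn_leq; apply/andP; split.
- have <- : #|setX Q [set: 'I_k]| = #|Q| * k by rewrite cardsX cardsT card_ord.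
  rewrite -(card_in_imset (f := fun p => upd p.1 y p.2) (D := mem (setX Q setT))).
    apply: subset_leq_card; apply/subsetP=> _ /imsetP[[c i] /setXP[cQ _] ->] /=.
    by apply: HS; move: cQ; rewrite inE => /andP[].
  move=> [c i] [c' i'] /setXP[cQ _] /setXP[c'Q _] /= E.
  have Ex : forall x, upd c y i x = upd c' y i' x by move=> x; rewrite E.
  have ii : i = i' by have := Ex y; rewrite !updE eqxx.
  subst i'; congr (_, _); apply/ffunP=> x.
  case: (eqVneq x y) => [->|xy].
    move: cQ c'Q; rewrite !inE => /andP[_ /eqP->] /andP[_ /eqP->].
    by have := Ex a; rewrite !updE ay.
  by have := Ex x; rewrite !updE (negbTE xy).
- rewrite -(card_in_imset (f := fun c => (upd c y (c a), c y)) (D := mem S)).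
    have -> : #|Q| * k = #|setX Q [set: 'I_k]| by rewrite cardsX cardsT card_ord.
    apply: subset_leq_card; apply/subsetP=> _ /imsetP[c cS ->] /=.
    by rewrite !inE /= (HS _ _ cS) !updE eqxx ay eqxx.
  move=> c c' cS c'S [E1 E2]; apply/ffunP=> x.
  case: (eqVneq x y) => [->//|xy].
  have := congr1 (fun f : {ffun V -> 'I_k} => f x) E1.
  by rewrite !updE (negbTE xy).
Qed.

Definition mono3 (V : finType) (T : rel V) k (A : {set V}) (c : {ffun V -> 'I_k}) : bool :=
  [exists x, exists y, exists z,
     [&& [&& x \in A, y \in A & z \in A], [&& T x y, T y z & T z x] &
         (c x == c y) && (c y == c z)]].

Definition Bs (V : finType) (T : rel V) k (A : {set V}) : {set {ffun V -> 'I_k}} :=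
  [set c | mono3 T A c].

Lemma mono3_imp (V : finType) (T : rel V) k (A : {set V}) (c c' : {ffun V -> 'I_k}) :
  (forall x, x \in A -> c x = c' x) -> mono3 T A c -> mono3 T A c'.
Proof.
move=> H /existsP[x /existsP[y /existsP[z /and3P[/and3P[xA yA zA] Ts /andP[e1 e2]]]]].
apply/existsP; exists x; apply/existsP; exists y; apply/existsP; exists z.
by rewrite xA yA zA Ts -(H x xA) -(H y yA) -(H z zA) e1 e2.
Qed.

Lemma mono3_sub (V : finType) (T : rel V) k (A A' : {set V}) (c : {ffun V -> 'I_k}) :
  A \subset A' -> mono3 T A c -> mono3 T A' c.
Proof.
move=> sub /existsP[x /existsP[y /existsP[z /and3P[/and3P[xA yA zA] Ts es]]]].
apply/existsP; exists x; apply/existsP; exists y; apply/existsP; exists z.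
by rewrite !(subsetP sub) // Ts es.
Qed.

Lemma Bs_upd (V : finType) (T : rel V) k (A : {set V}) (c : {ffun V -> 'I_k}) y i :
  y \notin A -> (c \in Bs T k A) = (upd c y i \in Bs T k A).
Proof.
move=> yA; rewrite !inE; apply/idP/idP; apply: mono3_imp => x xA;
  rewrite updE; case: eqP => // e; subst; by rewrite xA in yA.
Qed.

Definition Qs (V : finType) k (a b : V) := [set c : {ffun V -> 'I_k} | c b == c a].

Lemma L1 (V : finType) (T : rel V) k (A : {set V}) y a b :
  is_tournament T -> y \notin A -> a \in A -> b \in A -> T y a -> T a b -> T b y ->
  k * #|Bs T k (y |: A)| + #|Bs T k A :&: Qs k a b| >= k * #|Bs T k A| + #|Qs k a b|.
Proof.
move=> Tt yA aA bA Tya Tab Tby; set Q := Qs k a b.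
have ya : y != a by apply: tour_neq Tya.
have yb : y != b by rewrite eq_sym; apply: tour_neq Tby.
have ba : b != a by rewrite eq_sym; apply: tour_neq Tab.
have by' : (b == y) = false by rewrite eq_sym; apply: negbTE.
have ay' : (a == y) = false by rewrite eq_sym; apply: negbTE.
set B := Bs T k A.
set M := Q :&: [set c : {ffun V -> 'I_k} | c y == c a].
have QM : #|M| * k = #|Q|.
  apply: card_fix => // c i; rewrite !inE !updE.
  by rewrite by' ay'.
have BQM : #|B :&: Q :&: [set c : {ffun V -> 'I_k} | c y == c a]| * k = #|B :&: Q|.
  apply: card_fix => // c i; rewrite !inE => /andP[cB cQ].
  rewrite !updE by' ay' cQ andbT.
  by move: (Bs_upd T c i yA); rewrite !inE => <-.
have BM : B :&: M = B :&: Q :&: [set c : {ffun V -> 'I_k} | c y == c a] by rewrite /M setIA.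
have sub : B :|: M \subset Bs T k (y |: A).
  apply/subsetP=> c; rewrite !inE => /orP[cB|/andP[/eqP cba /eqP cya]].
    by apply: mono3_sub cB; apply: subsetUr.
  apply/existsP; exists y; apply/existsP; exists a; apply/existsP; exists b.
  by rewrite !inE eqxx aA bA !orbT Tya Tab Tby cya cba !eqxx.
have := subset_leq_card sub; rewrite cardsU BM.
have : #|B :&: Q :&: [set c : {ffun V -> 'I_k} | c y == c a]| <= #|M|.
  by apply: subset_leq_card; rewrite /M -setIA; apply: subsetIr.
move: QM BQM; set m := #|M|; set bq := #|B :&: Q :&: _|; set b' := #|Bs T k _|.
move=> QM BQM h1 h2.
rewrite -QM -BQM.
have : k * (#|B| + m - bq) <= k * b' by rewrite leq_mul2l h2 orbT.
rewrite !mulnBr mulnDr (mulnC m k) (mulnC bq k).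
have : k * bq <= k * m by rewrite leq_mul2l h1 orbT.
move: (k * bq) (k * m) (k * #|B|) (k * b') => x1 x2 x3 x4.
clear; lia.
Qed.

Lemma arith_step k' B B' BQ K1 P R :
  K1 <= B + k'.+1 * P * R -> k'.+1 * B + K1 <= k'.+1 * B' + BQ -> BQ <= B ->
  K1 <= B' + P * (k' * R).
Proof.
move=> h1 h2 h3.
rewrite -(leq_pmul2l (ltn0Sn k')).
have h4 : k' * K1 <= k' * (B + k'.+1 * P * R) by rewrite leq_mul2l h1 orbT.
lia.
Qed.

Lemma arith_step_strict k' B B' BQ K1 P R :
  K1 <= B + k'.+1 * P * R -> k'.+1 * B + K1 <= k'.+1 * B' + BQ -> BQ < B ->
  K1 < B' + P * (k' * R).
Proof.
move=> h1 h2 h3.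
rewrite -(ltn_pmul2l (ltn0Sn k')).
have h4 : k' * K1 <= k' * (B + k'.+1 * P * R) by rewrite leq_mul2l h1 orbT.
lia.
Qed.

Lemma card_all (V : finType) k : #|[set: {ffun V -> 'I_k}]| = k ^ #|V|.
Proof. by rewrite cardsT card_ffun card_ord. Qed.

Lemma card_Qs (V : finType) k' (a b : V) :
  b != a -> #|Qs k'.+1 a b| = k'.+1 ^ (#|V|.-1).
Proof.
move=> ba.
have := @card_fix V k'.+1 [set: {ffun V -> 'I_k'.+1}] b a ba.
rewrite setTI card_all => H.
have {}H : #|Qs k'.+1 a b| * k'.+1 = k'.+1 ^ #|V|.
  by have := H (fun c i _ => in_setT (upd c b i)).
have : 0 < #|V| by apply/card_gt0P; exists a.
case: #|V| H => [//|N] H _.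
by apply/eqP; rewrite -(eqn_pmul2r (ltn0Sn k')) H expnSr.
Qed.

Definition InvT (V : finType) (T : rel V) k' (A : {set V}) : Prop :=
  k'.+1 ^ (#|V|.-1) <= #|Bs T k'.+1 A| + k'.+1 ^ (#|V| - #|A|).+1 * k' ^ (#|A| - 2).

Definition InvTs (V : finType) (T : rel V) k' (A : {set V}) : Prop :=
  k'.+1 ^ (#|V|.-1) < #|Bs T k'.+1 A| + k'.+1 ^ (#|V| - #|A|).+1 * k' ^ (#|A| - 2).

Lemma Inv_small (V : finType) (T : rel V) k' (A : {set V}) :
  #|A| <= 2 -> InvT T k' A.
Proof.
move=> c2; rewrite /InvT.
have -> : #|A| - 2 = 0 by lia.
rewrite expn0 muln1; apply: leq_trans (leq_addl _ _).
by apply: leq_pexp2l => //; lia.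
Qed.

Lemma Inv_step (V : finType) (T : rel V) k' (A : {set V}) v p q :
  is_tournament T -> v \notin A -> p \in A -> q \in A -> T v p -> T p q -> T q v ->
  2 <= #|A| -> InvT T k' A ->
  InvT T k' (v |: A) /\
  ((exists2 c, c \in Bs T k'.+1 A & c p != c q) -> InvTs T k' (v |: A)).
Proof.
move=> Tt vA pA qA Tvp Tpq Tqv c2 IH.
have H1 := L1 k'.+1 Tt vA pA qA Tvp Tpq Tqv.
have qp : q != p by rewrite eq_sym; apply: tour_neq Tpq.
rewrite (card_Qs _ qp) in H1.
have cV : #|v |: A| <= #|V| by rewrite -cardsT; apply: subset_leq_card; apply: subsetT.
rewrite /InvT /InvTs cardsU1 vA /= in cV *.
move: IH; rewrite /InvT => IH.
move: cV IH H1; set N := #|V|; move=> cV IH H1.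
have e1 : N - #|A| = (N - (1 + #|A|)).+1 by lia.
have e2 : 1 + #|A| - 2 = (#|A| - 2).+1 by lia.
rewrite e1 (expnS k'.+1 (N - (1 + #|A|)).+1) in IH; rewrite e2 (expnS k').
have hBQ : #|Bs T k'.+1 A :&: Qs k'.+1 p q| <= #|Bs T k'.+1 A|.
  by apply: subset_leq_card; apply: subsetIl.
split; first by apply: arith_step IH H1 hBQ; rewrite mulnA.
case=> c cB cpq; apply: arith_step_strict IH H1 _.
apply: proper_card; apply/properP; split; first by apply: subsetIl.
by exists c => //; rewrite in_setI cB /= inE eq_sym.
Qed.

Lemma Inv_strong (V : finType) (T : rel V) k' (A : {set V}) :
  is_tournament T -> strongin T A -> InvT T k' A.
Proof.
move=> Tt; move: {2}#|A| (leqnn #|A|) => m; elim: m A => [|m IHm] A cA sA.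
  by apply: Inv_small; apply: leq_trans cA _.
case: (leqP #|A| 2) => c2; first exact: Inv_small.
case: (leqP #|A| 3) => c3.
  have [v [p [q [/and3P[vA pA qA] Tvp Tpq Tqv]]]] := strong_tri Tt sA (ltnW c2).
  have e : A = v |: (A :\ v) by rewrite setD1K.
  have vp : p != v by rewrite eq_sym; apply: tour_neq Tvp.
  have vq : q != v by apply: tour_neq Tqv.
  have pA' : p \in A :\ v by rewrite !inE vp pA.
  have qA' : q \in A :\ v by rewrite !inE vq qA.
  have vn : v \notin A :\ v by rewrite !inE eqxx.
  have cA' : #|A :\ v| = 2.
    by apply/eqP; rewrite -eqSS -(cardD1S vA) eqn_leq c3 c2.
  rewrite e; apply: (proj1 (Inv_step Tt vn pA' qA' Tvp Tpq Tqv _ _)).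
    by rewrite cA'.
  by apply: Inv_small; rewrite cA'.
have [v vA sA'] := removal Tt sA c3.
have [w wA wv] := two_elems vA (ltnW c2).
have [p [q [pA qA Tvp Tpq Tqv]]] := tri_through Tt sA vA wA wv.
have e : A = v |: (A :\ v) by rewrite setD1K.
have vp : p != v by rewrite eq_sym; apply: tour_neq Tvp.
have vq : q != v by apply: tour_neq Tqv.
have pA' : p \in A :\ v by rewrite !inE vp pA.
have qA' : q \in A :\ v by rewrite !inE vq qA.
have vn : v \notin A :\ v by rewrite !inE eqxx.
have cA' : #|A :\ v|.+1 = #|A| by rewrite (cardD1S vA).
rewrite e; apply: (proj1 (Inv_step Tt vn pA' qA' Tvp Tpq Tqv _ _)).
  by rewrite -ltnS cA' ltnW.
by apply: IHm sA'; rewrite -ltnS cA'.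
Qed.

Lemma rank_connect (V : finType) (e : rel V) (r : V -> nat) x y :
  (forall u v, e u v -> r u < r v) -> connect e x y -> r x <= r y.
Proof.
move=> H /connectP[p pp ->]; elim: p x pp => [|z p IH] x //= /andP[exz pp].
by apply: leq_trans (ltnW (H _ _ exz)) (IH _ pp).
Qed.

Definition MidS n' : {set 'I_n'.+1} := [set j : 'I_n'.+1 | (0 < j) && (j < n')].

Lemma Dn_bad n' k (c : {ffun 'I_n'.+1 -> 'I_k}) :
  0 < n' -> ~~ proper_coloringb (Dn n'.+1) c ->
  (c ord0 == c ord_max) && [exists j in MidS n', c j == c ord0].
Proof.
move=> n0; rewrite /proper_coloringb negb_forall => /existsP[i].
rewrite negbK => /existsP[x /existsP[y /and4P[xC yC Dxy cyx]]].
set C := [set v | c v == i] in xC yC cyx.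
have inC : forall v, (v \in C) = (c v == i) by move=> v; rewrite inE.
suff : [&& ord0 \in C, ord_max \in C & [exists j in MidS n', j \in C]].
  rewrite !inC => /and3P[/eqP-> /eqP-> /existsP[j /andP[jM]]]; rewrite inC => /eqP cj.
  by rewrite eqxx /=; apply/existsP; exists j; rewrite jM cj eqxx.
apply/negPn/negP=> /negP Hn.
pose r := fun v : 'I_n'.+1 =>
  if (ord0 \in C) && (ord_max \in C) then (if v == ord_max then 0 else 1) else (v : nat).
have Hr : forall u v, (fun a b => Dn n'.+1 a b && (a \in C) && (b \in C)) u v -> r u < r v.
  move=> u v /= /andP[/andP[Duv uC] vC]; rewrite /r.
  move: Duv; rewrite /Dn /=.
  case: (boolP ((ord0 \in C) && (ord_max \in C))) => [/andP[z0C zlC]|nb].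
    have nomid : forall w, w \in C -> ((w : nat) == 0) || ((w : nat) == n').
      move=> w wC; apply/negPn/negP=> wm; apply: Hn; rewrite z0C zlC /=.
      apply/existsP; exists w; rewrite wC andbT /MidS inE.
      have := ltn_ord w; move: wm; clear; lia.
    have := nomid u uC; have := nomid v vC.
    have vzl : (v == ord_max) = ((v : nat) == n') by [].
    have uzl : (u == ord_max) = ((u : nat) == n') by [].
    move: n0; rewrite vzl uzl.
    case: ((u : nat) =P n') => hu; case: ((v : nat) =P n') => hv; clear -hu hv; lia.
  case/orP=> [/andP[uv _]//|/and3P[/eqP un /eqP v0 _]].
  have eu : u = ord_max by apply: val_inj.
  have ev : v = ord0 by apply: val_inj.
  by move: nb; rewrite -eu -ev uC vC.
have := rank_connect Hr cyx.
have := Hr x y; rewrite /= Dxy xC yC => /(_ isT).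
by move=> h1 h2; have := leq_trans h1 h2; rewrite ltnn.
Qed.

Lemma card_MidS n' : 0 < n' -> #|MidS n'| = n'.-1.
Proof.
move=> n0.
have e : MidS n' = ~: [set ord0; ord_max].
  apply/setP=> j; rewrite /MidS !inE negb_or -!val_eqE /=.
  have := ltn_ord j; move: n0; clear; lia.
have := cardsC [set (ord0 : 'I_n'.+1); ord_max]; rewrite -e cards2 card_ord.
have -> : (ord0 : 'I_n'.+1) != ord_max by rewrite -val_eqE /= eq_sym -lt0n.
move=> h; simpl in h; move: h; set a := #|MidS n'|; move=> h; lia.
Qed.

Definition Nset n' k (A : {set 'I_n'.+1}) : {set {ffun 'I_n'.+1 -> 'I_k}} :=
  [set c : {ffun 'I_n'.+1 -> 'I_k} | (c ord0 == c ord_max) && [exists j in A, c j == c ord0]].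

Lemma Nset_upd n' k (A : {set 'I_n'.+1}) (c : {ffun 'I_n'.+1 -> 'I_k}) y i :
  y \notin A -> y != ord0 -> y != ord_max ->
  (upd c y i \in Nset k A) = (c \in Nset k A).
Proof.
move=> yA y0 yl.
have y0' : (ord0 == y) = false by rewrite eq_sym; apply: negbTE.
have yl' : (ord_max == y) = false by rewrite eq_sym; apply: negbTE.
rewrite !inE !updE y0' yl'.
congr (_ && _); apply/existsP/existsP=> -[j /andP[jA e]]; exists j; rewrite jA /=;
  (have jy : (j == y) = false by apply/negbTE; apply: contraNneq yA => <-);
  by move: e; rewrite ?updE ?jy ?y0'.
Qed.

Lemma InvD n' k' : 0 < n' -> forall m (A : {set 'I_n'.+1}), A \subset MidS n' -> #|A| = m ->
  #|Nset k'.+1 A| + k'.+1 ^ (n' - #|A|) * k' ^ #|A| <= k'.+1 ^ n'.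
Proof.
move=> n0; elim=> [|m IH] A AM cA.
  have -> : A = set0 by apply/eqP; rewrite -cards_eq0 cA.
  have -> : Nset k'.+1 (set0 : {set 'I_n'.+1}) = set0.
    by apply/setP=> c; rewrite !inE; case: (_ == _) => //=; apply/existsP=> [[j]]; rewrite inE.
  by rewrite cards0 cards0 subn0 expn0 muln1.
have [y yA] : exists y, y \in A by apply/card_gt0P; rewrite cA.
set A' := A :\ y.
have cA' : #|A'| = m by move: (cardD1S yA); rewrite cA => -[].
have A'M : A' \subset MidS n' by apply: subset_trans AM; apply: subsetDl.
have IHA := IH A' A'M cA'.
have yM : y \in MidS n' by apply: (subsetP AM).
have y0 : y != ord0 by move: yM; rewrite /MidS inE -val_eqE /= => /andP[]; rewrite lt0n.
have yl : y != ord_max.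
  by move: yM; rewrite /MidS inE -val_eqE /= => /andP[_]; rewrite ltn_neqAle => /andP[].
have yA' : y \notin A' by rewrite !inE eqxx.
set Q := Qs k'.+1 (ord_max : 'I_n'.+1) ord0.
set S := Q :\: Nset k'.+1 A'.
have SX := @card_fix _ k'.+1 S y ord0 y0.
have {}SX : #|S :&: [set c : {ffun 'I_n'.+1 -> 'I_k'.+1} | c y == c ord0]| * k'.+1 = #|S|.
  have y0' : (ord0 == y) = false by rewrite eq_sym; apply: negbTE.
  have yl' : (ord_max == y) = false by rewrite eq_sym; apply: negbTE.
  apply: SX => c i; rewrite !in_setD Nset_upd // => /andP[-> cQ] /=.
  by move: cQ; rewrite /Q /Qs !inE !updE y0' yl'.
have NQ : Nset k'.+1 A' \subset Q.
  by apply/subsetP=> c; rewrite !inE eq_sym => /andP[].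
have cS : #|S| = #|Q| - #|Nset k'.+1 A'| by rewrite cardsD (setIidPr NQ).
have cQ : #|Q| = k'.+1 ^ n'.
  rewrite /Q card_Qs ?card_ord //.
  by rewrite -val_eqE /= eq_sym -lt0n.
have sub : Nset k'.+1 A \subset Nset k'.+1 A' :|: (S :&: [set c : {ffun 'I_n'.+1 -> 'I_k'.+1} | c y == c ord0]).
  apply/subsetP=> c; rewrite !inE => /andP[c0l /existsP[j /andP[jA cj]]].
  rewrite c0l /=; set E := [exists _ in _, _]; case: (boolP E) => //= nj.
  case: (eqVneq j y) => [<-//|jy].
  by move/existsP: nj; case; exists j; rewrite !inE jy jA cj.
have hsub := subset_leq_card sub.
have hU := (leq_card_setU (Nset k'.+1 A') (S :&: [set c : {ffun 'I_n'.+1 -> 'I_k'.+1} | c y == c ord0])).1.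
have mM : m.+1 <= n'.-1 by rewrite -(card_MidS n0) -cA; apply: subset_leq_card.
have NK : #|Nset k'.+1 A'| <= #|Q| by apply: subset_leq_card.
rewrite cA; rewrite cA' in IHA.
have e1 : n' - m = (n' - m.+1).+1 by lia.
rewrite e1 expnS in IHA; rewrite expnS.
move: IHA hsub hU SX cS cQ NK.
set NA := #|Nset k'.+1 A'|; set X := #|S :&: _|; set N := #|Nset k'.+1 A|.
set P := k'.+1 ^ (n' - m.+1); set R := k' ^ m; set K := k'.+1 ^ n'.
move=> h1 h2 h3 h4 h5 h6 h7.
rewrite -(leq_pmul2l (ltn0Sn k')).
have h8 : k' * (NA + k'.+1 * P * R) <= k' * K by rewrite leq_mul2l h1 orbT.
rewrite h6 in h5 h7; rewrite h5 in h4.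
move: h1 h2 h3 h4 h7 h8; move: (#|_ :|: _|) => u.
move=> h1 h2 h3 h4 h7 h8.
have h9 : k'.+1 * N <= k'.+1 * (NA + X) by rewrite leq_mul2l (leq_trans h2 h3) orbT.
move: h1 h4 h7 h8 h9; clear; nia.
Qed.

Lemma Dn_count n' k' : 0 < n' ->
  #|[set c : {ffun 'I_n'.+1 -> 'I_k'.+1} | ~~ proper_coloringb (Dn n'.+1) c]|
    + k'.+1 * k' ^ n'.-1 <= k'.+1 ^ n'.
Proof.
move=> n0.
have H := InvD k' n0 (subxx (MidS n')) (erefl _).
rewrite card_MidS // in H.
have e : n' - n'.-1 = 1 by lia.
rewrite e expn1 in H.
apply: leq_trans H; rewrite leq_add2r; apply: subset_leq_card.
apply/subsetP=> c; rewrite inE => /(Dn_bad n0) h; by rewrite inE.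
Qed.


Lemma build_iso n' (T : rel 'I_n'.+1) (a b : 'I_n'.+1) :
  is_tournament T -> 2 <= n' -> T a b ->
  (forall x, x != a -> x != b -> T x a && T b x) ->
  (forall x y z, [&& x != a, x != b, y != a, y != b, z != a & z != b] ->
     T x y -> T y z -> T z x -> False) ->
  digraph_iso T (Dn n'.+1).
Proof.
move=> Tt n2 Tab Hmid Hnt.
have ab : a != b by apply: tour_neq Tab.
pose mid x := (x != a) && (x != b).
pose ind x := #|[set z | mid z && T z x]|.
have trans : forall x y z, mid x -> mid y -> mid z -> T z x -> T x y -> T z y.
  move=> x y z /andP[xa xb] /andP[ya yb] /andP[za zb] Tzx Txy.
  case Tzy: (T z y) => //; exfalso.
  have zy : z != y.
    by apply/eqP=> e; subst; have := tour_anti Tt Txy; rewrite Tzx.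
  have Tyz := tour_tot Tt zy (negbT Tzy).
  by apply: (Hnt z x y); rewrite ?za ?zb ?xa ?xb ?ya ?yb.
have indlt : forall x y, mid x -> mid y -> T x y -> ind x < ind y.
  move=> x y mx my Txy; apply: proper_card; apply/properP; split.
    apply/subsetP=> z; rewrite !inE => /andP[mz Tzx].
    by rewrite mz (trans x y z).
  by exists x; rewrite !inE ?mx ?Txy //= Tt.1.
have indle : forall x, mid x -> ind x <= n' - 2.
  move=> x /andP[xa xb].
  have sub : [set z | mid z && T z x] \subset ~: (x |: [set a; b]).
    apply/subsetP=> z; rewrite !inE => /andP[/andP[za zb] Tzx].
    rewrite (negbTE za) (negbTE zb) /= orbF; apply/eqP=> e; subst.
    by rewrite (negbTE (Tt.1 x)) in Tzx.
  have c3 : #|x |: [set a; b]| = 3.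
    by rewrite cardsU1 cards2 ab !inE negb_or xa xb.
  have := subset_leq_card sub; have := cardsC (x |: [set a; b]).
  rewrite c3 card_ord /ind => h1 h2; lia.
pose f x : 'I_n'.+1 := if x == b then ord0 else if x == a then ord_max else inord (ind x).+1.
have fv : forall x, (f x : nat) = if x == b then 0 else if x == a then n' else (ind x).+1.
  move=> x; rewrite /f; case xb: (x == b) => //; case xa: (x == a) => //.
  have mx : mid x by rewrite /mid xa xb.
  rewrite inordK //; have := indle x mx; lia.
have Tba : T b a = false by apply: negbTE; apply: tour_anti Tt Tab.
have Tbx : forall x, mid x -> T b x by move=> x /andP[xa xb]; case/andP: (Hmid x xa xb).
have Txa : forall x, mid x -> T x a by move=> x /andP[xa xb]; case/andP: (Hmid x xa xb).
have Tax : forall x, mid x -> T a x = false.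
  by move=> x mx; apply: negbTE; apply: tour_anti Tt (Txa x mx).
have Txb : forall x, mid x -> T x b = false.
  by move=> x mx; apply: negbTE; apply: tour_anti Tt (Tbx x mx).
have Tirr : forall x, T x x = false by move=> x; apply: negbTE; apply: Tt.1.
have midE : forall x, (x == b) = false -> (x == a) = false -> mid x.
  by move=> x xb xa; rewrite /mid xb xa.
have mm : forall x y, mid x -> mid y -> T x y = (ind x < ind y).
  move=> x y mx my; case Txy: (T x y); first by rewrite indlt.
  case: (eqVneq x y) => [->|xy]; first by rewrite ltnn.
  have Tyx := tour_tot Tt xy (negbT Txy).
  by have := indlt y x my mx Tyx; lia.
exists f; split.
  apply: injF_bij => x y /(congr1 val) /=; rewrite !fv.
  case xb: (x == b); case yb: (y == b); rewrite ?(eqP xb) ?(eqP yb) //;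
  case xa: (x == a); case ya: (y == a); rewrite ?(eqP xa) ?(eqP ya) //;
  try (move=> h; exfalso; move: h; clear -n2; lia).
  - move=> h; exfalso; have := indle y (midE y yb ya); move: h n2; clear; lia.
  - move=> h; exfalso; have := indle x (midE x xb xa); move: h n2; clear; lia.
  - case=> e; case: (eqVneq x y) => // xy; exfalso.
    have mx := midE x xb xa; have my := midE y yb ya.
    case Txy: (T x y).
      by have := indlt x y mx my Txy; rewrite e ltnn.
    by have := indlt y x my mx (tour_tot Tt xy (negbT Txy)); rewrite e ltnn.
move=> x y; rewrite /Dn /= !fv.
case xb: (x == b); case yb: (y == b); rewrite ?(eqP xb) ?(eqP yb) ?Tirr;
  case xa: (x == a); case ya: (y == a); rewrite ?(eqP xa) ?(eqP ya) ?Tirr ?Tab ?Tba;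
  try (move: n2; clear; lia).
all: first [ have mx := midE x xb xa | idtac ]; first [ have my := midE y yb ya | idtac ].
all: first [ rewrite (Tbx y my) | rewrite (Txb x mx) | rewrite (Tax y my) | rewrite (Txa x mx)
           | rewrite (mm x y mx my) ].
all: first [ have := indle x mx | idtac ]; first [ have := indle y my | idtac ].
all: move: n2; clear; lia.
Qed.

Definition triW (V : finType) (T : rel V) (W : {set V}) x y z :=
  [&& (x \in W) && (y \in W) && (z \in W), T x y, T y z & T z x].

Lemma slack (V : finType) (T : rel V) k' (W : {set V}) p q x y z :
  0 < k' -> triW T W x y z -> q != p -> [&& p != x, p != y & p != z] ->
  exists2 c, c \in Bs T k'.+1 W & c p != c q.
Proof.
move=> k0 /and4P[/andP[/andP[xW yW] zW] Txy Tyz Tzx] qp /and3P[px py pz].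
exists [ffun u => if u == p then ord0 else ord_max].
  rewrite inE; apply/existsP; exists x; apply/existsP; exists y; apply/existsP; exists z.
  rewrite xW yW zW Txy Tyz Tzx !ffunE.
  by rewrite !(eq_sym _ p) (negbTE px) (negbTE py) (negbTE pz) /= !eqxx.
rewrite !ffunE eqxx (negbTE qp) -val_eqE /=; by rewrite eq_sym -lt0n.
Qed.

Lemma T_strict n' (T : rel 'I_n'.+1) k' :
  is_tournament T -> strongly_connected T -> 3 <= n' -> 0 < k' ->
  ~ digraph_iso T (Dn n'.+1) -> InvTs T k' [set: 'I_n'.+1].
Proof.
move=> Tt sc n3 k0 niso.
have sT : strongin T setT.
  move=> x y _ _; apply: connect_sub (sc x y) => u w Tuw.
  by apply: connect1; rewrite /rin Tuw !inE.
have c4 : 4 <= #|[set: 'I_n'.+1]| by rewrite cardsT card_ord.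
have [v _ sW] := removal Tt sT c4.
set W := setT :\ v.
have vT : v \in [set: 'I_n'.+1] by rewrite inE.
have cW : #|W| = n' by move: (cardD1S vT); rewrite cardsT card_ord => -[].
have IW := Inv_strong k' Tt sW.
have vn : v \notin W by rewrite !inE eqxx.
have inW : forall x, x != v -> x \in W by move=> x xv; rewrite !inE xv.
have eT : v |: W = setT by rewrite setD1K.
suff HH : exists p q,
    [/\ p \in W, q \in W, T v p, T p q & T q v] /\ exists2 c, c \in Bs T k'.+1 W & c p != c q.
  case: HH => p [q [[pW qW Tvp Tpq Tqv] Hc]].
  rewrite -eT; apply: (proj2 (Inv_step Tt vn pW qW Tvp Tpq Tqv _ IW)) => //.
  by rewrite cW; move: n3; clear; lia.
have [w wT wv] : exists2 w, w \in [set: 'I_n'.+1] & w != v.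
  by apply: two_elems => //; rewrite cardsT card_ord; move: n3; clear; lia.
have [a [b [_ _ Tva Tab Tbv]]] := tri_through Tt sT vT wT wv.
have av : a != v by rewrite eq_sym; apply: tour_neq Tva.
have bv : b != v by apply: tour_neq Tbv.
have ab : a != b by apply: tour_neq Tab.
have aW := inW a av; have bW := inW b bv.
case: (boolP [exists x, exists y, exists z, triW T W x y z &&
      ([&& a != x, a != y & a != z] || [&& b != x, b != y & b != z])]).
  case/existsP=> x /existsP[y /existsP[z /andP[tW /orP[Ha|Hb]]]].
    exists a, b; split => //; apply: slack k0 tW _ Ha.
    by rewrite eq_sym.
  exists a, b; split => //.
  have [c cB cba] := slack k0 tW ab Hb.
  by exists c; rewrite // eq_sym.
move=> H4.
have H4' : forall x y z, triW T W x y z ->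
    ~~ [&& a != x, a != y & a != z] /\ ~~ [&& b != x, b != y & b != z].
  move=> x y z tW; apply/andP; rewrite -negb_or; apply/negP=> h.
  move/negP: H4; apply; apply/existsP; exists x; apply/existsP; exists y;
    apply/existsP; exists z; by rewrite tW.
have Hmid : forall x, x != a -> x != b -> T x a && T b x.
  move=> x xa xb; case: (eqVneq x v) => [->|xv]; first by rewrite Tva Tbv.
  have xW := inW x xv.
  have c2W : 2 <= #|W| by rewrite cW; move: n3; clear; lia.
  have [w' w'W w'x] := two_elems xW c2W.
  have [q [r [qW rW Txq Tqr Trx]]] := tri_through Tt sW xW w'W w'x.
  have [] := H4' x q r; first by rewrite /triW xW qW rW Txq Tqr Trx.
  rewrite (eq_sym a x) (eq_sym b x) xa xb /= !negb_and !negbK /=.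
  case/orP=> /eqP ea; case/orP=> /eqP eb; subst.
  - by rewrite eqxx in ab.
  - by rewrite Txq Trx.
  - by have := tour_anti Tt Tab; rewrite Tqr.
  - by rewrite eqxx in ab.
have Txa : forall x, x != a -> x != b -> T x a by move=> x xa xb; case/andP: (Hmid x xa xb).
have Tbx : forall x, x != a -> x != b -> T b x by move=> x xa xb; case/andP: (Hmid x xa xb).
case: (boolP [exists x, exists y, exists z, triW T setT x y z &&
      [&& [&& x != a, x != b, y != a & y != b], z != a & z != b]]); last first.
  move=> H5; exfalso; apply: niso; apply: build_iso Tt _ Tab Hmid _; first by move: n3; clear; lia.
  move=> x y z hs Txy Tyz Tzx; move/negP: H5; apply.
  apply/existsP; exists x; apply/existsP; exists y; apply/existsP; exists z.
  move: hs; rewrite /triW !inE Txy Tyz Tzx /=.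
  by case/and5P=> -> -> -> -> /andP[-> ->].
case/existsP=> x /existsP[y /existsP[z /andP[tT /and3P[/and4P[xa xb ya yb] za zb]]]].
have fin : forall p q, T v p -> T p q -> T q v -> p != a -> p != b -> q != a -> q != b ->
    exists p q, [/\ p \in W, q \in W, T v p, T p q & T q v] /\
      exists2 c, c \in Bs T k'.+1 W & c p != c q.
  move=> p q Tvp Tpq Tqv pa pb qa qb.
  have pW : p \in W by apply: inW; rewrite eq_sym; apply: tour_neq Tvp.
  have qW : q \in W by apply: inW; apply: tour_neq Tqv.
  exists p, q; split => //.
  have t : triW T W a b p by rewrite /triW aW bW pW Tab Tbx // Txa.
  have qp : p != q by apply: tour_neq Tpq.
  have side : [&& q != a, q != b & q != p] by rewrite qa qb eq_sym qp.
  have [c cB cqp] := slack k0 t qp side.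
  by exists c; rewrite // eq_sym.
move: tT; rewrite /triW => /and4P[_ Txy Tyz Tzx].
case: (eqVneq x v) => [exv|xv]; first by subst; apply: fin Txy Tyz Tzx _ _ _ _.
case: (eqVneq y v) => [eyv|yv]; first by subst; apply: fin Tyz Tzx Txy _ _ _ _.
case: (eqVneq z v) => [ezv|zv]; first by subst; apply: fin Tzx Txy Tyz _ _ _ _.
exfalso.
have tW : triW T W x y z by rewrite /triW (inW x xv) (inW y yv) (inW z zv) Txy Tyz Tzx.
have [_] := H4' x y z tW.
by rewrite eq_sym xb eq_sym yb eq_sym zb.
Qed.

Lemma mono_notproper (V : finType) (T : rel V) k (c : {ffun V -> 'I_k}) :
  mono3 T setT c -> ~~ proper_coloringb T c.
Proof.
case/existsP=> x /existsP[y /existsP[z /and3P[_ /and3P[Txy Tyz Tzx] /andP[/eqP cxy /eqP cyz]]]].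
rewrite /proper_coloringb negb_forall; apply/existsP; exists (c x); rewrite negbK.
apply/existsP; exists x; apply/existsP; exists y.
have xC : x \in [set v | c v == c x] by rewrite inE.
have yC : y \in [set v | c v == c x] by rewrite inE cxy.
have zC : z \in [set v | c v == c x] by rewrite inE cxy cyz.
rewrite xC yC Txy /=.
set C := [set v | c v == c x] in xC yC zC *.
pose e := fun a b => T a b && (a \in C) && (b \in C).
have e1 : e y z by rewrite /e Tyz yC zC.
have e2 : e z x by rewrite /e Tzx zC xC.
exact: connect_trans (connect1 e1) (connect1 e2).
Qed.

Lemma card_split (V : finType) k (P : pred {ffun V -> 'I_k}) :
  #|[set c | P c]| + #|[set c | ~~ P c]| = k ^ #|V|.
Proof.
rewrite -card_all cardsT -(cardsC [set c | P c]); congr (_ + _).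
by apply: eq_card => c; rewrite !inE.
Qed.

Theorem mainTheorem13 (n : nat) (T : rel 'I_n) (k : nat) :
  0 < n ->
  is_tournament T ->
  strongly_connected T ->
  ~ digraph_iso T (Dn n) ->
  1 < k ->
  chrom_poly T k < chrom_poly (Dn n) k.
Proof.
case: n T => [//|n'] T _ Tt sc niso.
case: k => [//|k'] k1.
have k0 : 0 < k' by [].
case: (ltnP n' 3) => hn.
  exfalso.
  case: n' T Tt sc niso hn => [|[|[|//]]] T Tt sc niso _.
  - apply: niso; exists id; split; first by exists id.
    move=> x y; rewrite !ord1 (negbTE (Tt.1 _)) /Dn /=; by [].
  - have x0 : (ord0 : 'I_2) != ord_max by [].
    have [u [z [/= /eqP -> zx Tuz]]] := exit_connect (X := pred1 (ord0 : 'I_2)) (sc ord0 ord_max) (eqxx _) x0.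
    have x1 : ~~ (pred1 (ord_max : 'I_2)) ord0 by [].
    have [u' [z' [/= /eqP -> zx' Tuz']]] := exit_connect (X := pred1 (ord_max : 'I_2)) (sc ord_max ord0) (eqxx _) x1.
    have ez : z = (ord_max : 'I_2) by apply/val_inj; move: zx; rewrite -val_eqE /=; case: z {Tuz} => -[|[|]].
    have ez' : z' = (ord0 : 'I_2) by apply/val_inj; move: zx'; rewrite -val_eqE /=; case: z' {Tuz'} => -[|[|]].
    by subst; have := tour_anti Tt Tuz; rewrite Tuz'.
  - have sT : strongin T setT.
      move=> x y _ _; apply: connect_sub (sc x y) => u w Tuw.
      by apply: connect1; rewrite /rin Tuw !inE.
    have vT : (ord0 : 'I_3) \in setT by rewrite inE.
    have wT : (ord_max : 'I_3) \in setT by rewrite inE.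
    have [a [b [_ _ Tva Tab Tbv]]] := tri_through Tt sT vT wT isT.
    have [c3 _] := tri_set Tt Tva Tab Tbv.
    have all3 : forall x, x \in (ord0 : 'I_3) |: (a |: [set b]).
      have e : (ord0 : 'I_3) |: (a |: [set b]) = setT.
        by apply/eqP; rewrite eqEcard subsetT /= c3 cardsT card_ord.
      by move=> x; rewrite e inE.
    have Hv : forall x, x != a -> x != b -> x = ord0.
      move=> x xa xb; move: (all3 x); rewrite !inE (negbTE xa) (negbTE xb) !orbF.
      by move/eqP.
    apply: niso; apply: (build_iso Tt _ Tab) => //.
      by move=> x xa xb; rewrite (Hv x xa xb) Tva Tbv.
    move=> x y z /and5P[xa xb ya yb /andP[za zb]] Txy.
    by rewrite (Hv x xa xb) (Hv y ya yb) (negbTE (Tt.1 _)) in Txy.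
have HT := T_strict Tt sc hn k0 niso.
have HD := Dn_count k' (ltn_trans (isT : 0 < 2) hn).
rewrite /InvTs cardsT !card_ord subnn /= in HT.
have sub : Bs T k'.+1 setT \subset [set c | ~~ proper_coloringb T c].
  by apply/subsetP=> c; rewrite !inE => /mono_notproper.
have hsub := subset_leq_card sub.
have sT := card_split (fun c : {ffun 'I_n'.+1 -> 'I_k'.+1} => proper_coloringb T c).
have sD := card_split (fun c : {ffun 'I_n'.+1 -> 'I_k'.+1} => proper_coloringb (Dn n'.+1) c).
rewrite /chrom_poly.
have e : n'.+1 - 2 = n'.-1 by lia.
rewrite e expn1 in HT; rewrite card_ord in sT sD.
move: HT HD hsub sT sD.
set B := #|Bs T k'.+1 _|.
set NT := #|[set c | ~~ proper_coloringb T c]|.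
set ND := #|[set c | ~~ proper_coloringb (Dn n'.+1) c]|.
set PT := #|[set c | proper_coloringb T c]|.
set PD := #|[set c | proper_coloringb (Dn n'.+1) c]|.
move: (k'.+1 * k' ^ n'.-1) (k'.+1 ^ n') (k'.+1 ^ n'.+1) => X K K1.
clear; lia.
Qed.
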